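(* There exists a CF program $\mathtt{p}$ that terminates on every input $x\in\{0,1\}^*$ and whose native running time $\mathit{time}_{\mathtt{p}}(x)$ is exponential in $|x|$ (in particular, not bounded by any polynomial in $|x|$).
   Context: CF (''cons-free'') is a first-order, call-by-value functional language over booleans and bit lists $\{0,1\}^*$. A program is a finite sequence of mutually recursive function definitions $\mathtt{f\ x1 \dots xm = e}$ ($m\ge0$), the first being a one-argument entry function. Expressions are $\mathtt{True}$, $\mathtt{False}$, $\mathtt{[]}$, variables, base calls $\mathtt{not\ e}$, $\mathtt{null\ e}$, $\mathtt{head\ e}$, $\mathtt{tail\ e}$, conditionals $\mathtt{if\ e_0\ then\ e_1\ else\ e_2}$, and calls $\mathtt{f\ e_1\dots e_m}$ of defined functions; there are no list constructors. Semantics is standard big-step call-by-value evaluation given by inference rules deriving $\mathtt{p},\rho\vdash\mathtt{e}\to v$ (a call evaluates all arguments, then the body in the new environment; a conditional evaluates its test, then only the selected branch). The derivation tree for the run on input $x$ is the computation tree $\mathcal{T}^{\mathtt{p},x}$, and the native running time $\mathit{time}_{\mathtt{p}}(x)$ is the number of nodes of $\mathcal{T}^{\mathtt{p},x}$. *)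

(* Defs.v *)
From Stdlib Require Import List Arith Lia.
Import ListNotations.

(* Values: booleans and bit lists {0,1}^* (bits encoded as bool, 1 = true). *)
Inductive value : Type :=
| VBool : bool -> value
| VList : list bool -> value.

(* Variables are de Bruijn indices into the parameter list
   of the enclosing function definition (x1 = index 0, ...).
   Defined functions are referred to by their position in the program. *)
Inductive expr : Type :=
| ETrue : expr
| EFalse : expr
| ENil : expr
| EVar : nat -> expr
| ENot : expr -> expr
| ENull : expr -> expr
| EHead : expr -> expr
| ETail : expr -> expr
| EIf : expr -> expr -> expr -> expr
| ECall : nat -> list expr -> expr.

(* A definition  f x1 ... xm = e  is the pair (m, e). *)
Definition fundef : Type := (nat * expr)%type.
(* A program is a finite sequence of definitions; the first is the entry. *)
Definition program : Type := list fundef.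

Fixpoint wf_expr (p : program) (m : nat) (e : expr) : Prop :=
  match e with
  | ETrue | EFalse | ENil => True
  | EVar i => i < m
  | ENot e | ENull e | EHead e | ETail e => wf_expr p m e
  | EIf e0 e1 e2 => wf_expr p m e0 /\ wf_expr p m e1 /\ wf_expr p m e2
  | ECall f es =>
      (exists d, nth_error p f = Some d /\ fst d = length es)
      /\ (fix wfl (l : list expr) : Prop :=
            match l with [] => True | e' :: l' => wf_expr p m e' /\ wfl l' end) es
  end.

Definition wf_program (p : program) : Prop :=
  (exists e, hd_error p = Some (1, e)) /\
  forall f m e, nth_error p f = Some (m, e) -> wf_expr p m e.

(* Big-step call-by-value semantics  p, rho |- e -> v  ;  the last index n
   is the number of nodes of the derivation (computation) tree. *)
Inductive eval (p : program) : list value -> expr -> value -> nat -> Prop :=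
| ev_true rho : eval p rho ETrue (VBool true) 1
| ev_false rho : eval p rho EFalse (VBool false) 1
| ev_nil rho : eval p rho ENil (VList []) 1
| ev_var rho i v : nth_error rho i = Some v -> eval p rho (EVar i) v 1
| ev_not rho e b n :
    eval p rho e (VBool b) n -> eval p rho (ENot e) (VBool (negb b)) (S n)
| ev_null rho e l n :
    eval p rho e (VList l) n ->
    eval p rho (ENull e) (VBool (match l with [] => true | _ => false end)) (S n)
| ev_head rho e b l n :
    eval p rho e (VList (b :: l)) n -> eval p rho (EHead e) (VBool b) (S n)
| ev_tail rho e b l n :
    eval p rho e (VList (b :: l)) n -> eval p rho (ETail e) (VList l) (S n)
| ev_if_true rho e0 e1 e2 v n0 n1 :
    eval p rho e0 (VBool true) n0 -> eval p rho e1 v n1 ->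
    eval p rho (EIf e0 e1 e2) v (S (n0 + n1))
| ev_if_false rho e0 e1 e2 v n0 n2 :
    eval p rho e0 (VBool false) n0 -> eval p rho e2 v n2 ->
    eval p rho (EIf e0 e1 e2) v (S (n0 + n2))
| ev_call rho f es vs m body v na nb :
    nth_error p f = Some (m, body) -> length es = m ->
    eval_args p rho es vs na -> eval p vs body v nb ->
    eval p rho (ECall f es) v (S (na + nb))
with eval_args (p : program) : list value -> list expr -> list value -> nat -> Prop :=
| ea_nil rho : eval_args p rho [] [] 0
| ea_cons rho e es v vs n ns :
    eval p rho e v n -> eval_args p rho es vs ns ->
    eval_args p rho (e :: es) (v :: vs) (n + ns).

(* The run of p on input x: the body of the entry function evaluated in the
   environment [x1 := x].  run p x v t : the run terminates with value v and
   its computation tree has t nodes, i.e. time_p(x) = t. *)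
Definition run (p : program) (x : list bool) (v : value) (t : nat) : Prop :=
  exists e, hd_error p = Some (1, e) /\ eval p [VList x] e v t.

(* Main.v *)
Require Import Defs.
From Stdlib Require Import List Arith Lia.
Import ListNotations.

Definition body : expr :=
  EIf (ENull (EVar 0)) ETrue
      (EIf (ECall 0 [ETail (EVar 0)]) (ECall 0 [ETail (EVar 0)]) EFalse).

Definition prog : program := [(1, body)].

Fixpoint T (n : nat) : nat :=
  match n with 0 => 4 | S n => 10 + 2 * T n end.

Lemma call_ev (b : bool) (l : list bool) :
  eval prog [VList l] body (VBool true) (T (length l)) ->
  eval prog [VList (b :: l)] (ECall 0 [ETail (EVar 0)]) (VBool true) (S (2 + T (length l))).
Proof.
  intro H.
  replace (S (2 + T (length l))) with (S ((2 + 0) + T (length l))) by lia.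
  eapply ev_call; [reflexivity | reflexivity | | exact H].
  apply ea_cons. 2: apply ea_nil.
  change 2 with (S 1). eapply ev_tail. apply ev_var. reflexivity.
Qed.

Lemma body_ev (l : list bool) :
  eval prog [VList l] body (VBool true) (T (length l)).
Proof.
  induction l as [|b l IH].
  - unfold body. change (T (length (@nil bool))) with (S (2 + 1)).
    apply ev_if_true.
    + change 2 with (S 1). apply (ev_null prog [VList []] (EVar 0) []). apply ev_var. reflexivity.
    + apply ev_true.
  - unfold body at 1.
    replace (T (length (b :: l))) with
      (S (2 + (S (S (2 + T (length l)) + S (2 + T (length l)))))) by (simpl; lia).
    eapply ev_if_false.
    + change 2 with (S 1). apply (ev_null prog [VList (b::l)] (EVar 0) (b::l)). apply ev_var. reflexivity.
    + apply ev_if_true; apply call_ev; exact IH.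
Qed.

Lemma T_lo n : 2 ^ n <= T n.
Proof. induction n; simpl; lia. Qed.

Lemma T_hi n : T n <= 14 ^ (n + 1).
Proof.
  assert (H : forall n, T n + 10 = 14 * 2 ^ n).
  { induction n0; simpl in *; lia. }
  assert (H2 : forall n, 2 ^ n <= 14 ^ n).
  { intro k; apply Nat.pow_le_mono_l; lia. }
  specialize (H n). specialize (H2 n).
  rewrite Nat.add_1_r. simpl. lia.
Qed.

Theorem theorem4 :
  exists p : program, wf_program p /\
    exists c : nat,
      forall x : list bool, exists v t,
        run p x v t /\ 2 ^ length x <= t /\ t <= c ^ (length x + 1).
Proof.
  exists prog. split.
  - split.
    + exists body. reflexivity.
    + intros f m e Hf. destruct f as [|f]; [|destruct f; discriminate].
      simpl in Hf. injection Hf as <- <-. simpl.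
      repeat split; try lia.
      all: exists (1, body); split; reflexivity.
  - exists 14. intro x. exists (VBool true), (T (length x)).
    split; [|split; [apply T_lo | apply T_hi]].
    exists body. split; [reflexivity | apply body_ev].
Qed.
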